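(* Let $\mu$ be a regular cardinal and let $\mathbf{K}$ be a $\mu$-AEC, regarded as a category. If $\lambda > \mathrm{LS}(\mathbf{K})$ is a $\mu$-closed cardinal, then there are no proper $\lambda^+$-directed boundedly $(<\lambda^+)$-presentable systems in $\mathbf{K}$.
   Context: A cardinal $\lambda$ is $\mu$-closed if $\theta^{<\mu} < \lambda$ for all $\theta<\lambda$. A $\mu$-ary abstract class is a pair $\mathbf{K}=(K,\le_{\mathbf{K}})$, $K$ a class of structures in a vocabulary $\tau(\mathbf{K})$ with symbols of arity $<\mu$, $\le_{\mathbf{K}}$ a partial order on $K$ respecting isomorphisms and extending substructure; $UM$ is the universe of $M$. It is a $\mu$-AEC if: (coherence) $M_0 \subseteq M_1 \le_{\mathbf{K}} M_2$ and $M_0 \le_{\mathbf{K}} M_2$ imply $M_0 \le_{\mathbf{K}} M_1$; (chain axioms) for every $\mu$-directed system $\langle M_i : i \in I\rangle$ (poset $I$ in which every subset of size $<\mu$ has an upper bound, $i\le j \Rightarrow M_i \le_{\mathbf{K}} M_j$), $\bigcup_i M_i\in K$, each $M_i \le_{\mathbf{K}} \bigcup_i M_i$, and $M_i \le_{\mathbf{K}} N$ for all $i$ implies $\bigcup_i M_i \le_{\mathbf{K}} N$; (LST) there is $\lambda=\lambda^{<\mu}\ge|\tau(\mathbf{K})|+\mu$ such that every $A\subseteq UM$, $M\in K$, is contained in some $M_0\le_{\mathbf{K}} M$ with $|UM_0|\le|A|^{<\mu}+\lambda$; $\mathrm{LS}(\mathbf{K})$ is the least such $\lambda$. As a category, morphisms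 $M\to N$ are maps $f$ that are isomorphisms of $M$ onto $f[M]$ with $f[M]\le_{\mathbf{K}} N$. For regular $\kappa$, an object $M$ is $\kappa$-presentable if $\mathrm{Hom}(M,-)$ preserves colimits of $\kappa$-directed diagrams; $(<\lambda)$-presentable means $\kappa$-presentable for some regular $\kappa<\lambda+\aleph_1$. A system is a diagram indexed by a poset; it is $\kappa$-directed if the poset is. A system $\langle M_i : i\in I\rangle$ with colimit $M$ and colimit maps $f_i$ is proper if there is no $i$ and $g: M\to M_i$ with $f_i g = \mathrm{id}_M$. It is boundedly $(<\lambda)$-presentable if for every $I_0\subseteq I$ that has an upper bound in $I$, the colimit of $\langle M_i : i\in I_0\rangle$ is $(<\lambda)$-presentable whenever it exists. *)

(* Defs.v *)
(* Cardinals are represented by types (cardinality = type up to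
   bijection); sizes are compared through injections.  A mu-AEC is presented,
   as usual in type theory, by its class of structures and its class of
   K-embeddings (the maps f : M -> N with f[M] <=_K N). *)
From Stdlib Require Import ProofIrrelevance.

Definition injective {A B : Type} (f : A -> B) : Prop :=
  forall x y, f x = f y -> x = y.

Definition cle (A B : Type) : Prop := exists f : A -> B, injective f.
Definition clt (A B : Type) : Prop := cle A B /\ ~ cle B A.

Definition infinite_card (A : Type) : Prop := cle nat A.

(* |K| is a regular (infinite) cardinal: not a union of fewer than |K| sets
   each of size < |K| (families are taken as subsets of K, which covers all
   cardinals < |K|). *)
Definition regular_card (K : Type) : Prop :=
  infinite_card K /\
  forall (P : K -> Prop) (Q : K -> K -> Prop),
    clt {x | P x} K ->
    (forall i, P i -> clt {y | Q i y} K) ->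
    clt {i : {x | P x} & {y | Q (proj1_sig i) y}} K.

(* D is an upper bound of { |X -> Theta| : |X| < |Mu| }, i.e. |D| >= Theta^{<Mu}
   (every cardinal < |Mu| is the size of a subset of Mu). *)
Definition ub_pow (Theta Mu D : Type) : Prop :=
  forall P : Mu -> Prop, clt {x | P x} Mu -> cle ({x | P x} -> Theta) D.

(* Theta^{<Mu} < |Lam|  (the sup is < Lam iff some upper bound is < Lam) *)
Definition pow_lt_lt (Theta Mu Lam : Type) : Prop :=
  exists Q : Lam -> Prop, clt {x | Q x} Lam /\ ub_pow Theta Mu {x | Q x}.

(* |X| <= Theta^{<Mu} + |Lam|: for every upper bound D of the family (it is
   enough to range over subsets of the disjoint union, which contains a copy
   of the supremum), |X| <= |D| + |Lam|. *)
Definition le_pow_lt_plus (X Theta Mu Lam : Type) : Prop :=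
  forall Q : {P : Mu -> Prop & ({x | P x} -> Theta)} -> Prop,
    ub_pow Theta Mu {s | Q s} -> cle X ({s | Q s} + Lam).

Definition mu_closed (Mu Lam : Type) : Prop :=
  forall P : Lam -> Prop, clt {x | P x} Lam -> pow_lt_lt {x | P x} Mu Lam.

Record vocab := Vocab {
  fsym : Type;                 (* function symbols (constants = nullary) *)
  rsym : Type;
  farity : fsym -> Type;       (* arity (a set of argument places) *)
  rarity : rsym -> Type }.

Record structure (t : vocab) := Struct {
  carrier : Type;
  fint : forall f : fsym t, (farity t f -> carrier) -> carrier;
  rint : forall r : rsym t, (rarity t r -> carrier) -> Prop }.
Arguments carrier {t}.
Arguments fint {t}.
Arguments rint {t}.

Definition emb {t : vocab} (M N : structure t) (h : carrier M -> carrier N) : Prop :=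
  injective h /\
  (forall f xs, h (fint M f xs) = fint N f (fun a => h (xs a))) /\
  (forall r xs, rint M r xs <-> rint N r (fun a => h (xs a))).

Definition iso {t : vocab} (M N : structure t) (h : carrier M -> carrier N) : Prop :=
  emb M N h /\ forall y, exists x, h x = y.

(* An abstract class: the class K and the relation <=_K, presented through the
   maps h with h[M] <=_K N (for M a substructure of N, the inclusion). *)
Record aclass := AClass {
  voc : vocab;
  inK : structure voc -> Prop;
  leK : forall M N : structure voc, (carrier M -> carrier N) -> Prop }.

Definition abstract_class (Mu : Type) (K : aclass) : Prop :=
  (forall f, clt (farity (voc K) f) Mu) /\
  (forall r, clt (rarity (voc K) r) Mu) /\
  (forall M N h, inK K M -> iso M N h -> inK K N) /\
  (forall M N h, leK K M N h -> inK K M /\ inK K N /\ emb M N h) /\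
  (* partial order (antisymmetry is automatic for inclusions) *)
  (forall M, inK K M -> leK K M M (fun x => x)) /\
  (forall M N P f g, leK K M N f -> leK K N P g -> leK K M P (fun x => g (f x))) /\
  (forall M M' N N' f g h, leK K M N f -> iso M' M g -> iso N N' h ->
      leK K M' N' (fun x => h (f (g x)))).

Record poset := Poset {
  pcar : Type;
  ple : pcar -> pcar -> Prop;
  ple_refl : forall i, ple i i;
  ple_trans : forall i j k, ple i j -> ple j k -> ple i k;
  ple_anti : forall i j, ple i j -> ple j i -> i = j }.

Definition directed_lt (Kap : Type) (I : poset) : Prop :=
  forall P : pcar I -> Prop, clt {i | P i} Kap ->
    exists j, forall i, P i -> ple I i j.

(* I is Lam^+-directed: every subset of size <= |Lam| (i.e. < Lam^+) has an
   upper bound *)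
Definition succ_directed (Lam : Type) (I : poset) : Prop :=
  forall P : pcar I -> Prop, cle {i | P i} Lam ->
    exists j, forall i, P i -> ple I i j.

Definition is_system (K : aclass) (I : poset) (D : pcar I -> structure (voc K))
  (d : forall i j, carrier (D i) -> carrier (D j)) : Prop :=
  (forall i, inK K (D i)) /\
  (forall i j, ple I i j -> leK K (D i) (D j) (d i j)) /\
  (forall i x, d i i x = x) /\
  (forall i j k x, ple I i j -> ple I j k -> d i k x = d j k (d i j x)).

Definition is_cocone (K : aclass) (I : poset) (D : pcar I -> structure (voc K))
  (d : forall i j, carrier (D i) -> carrier (D j))
  (L : structure (voc K)) (c : forall i, carrier (D i) -> carrier L) : Prop :=
  inK K L /\
  (forall i, leK K (D i) L (c i)) /\
  (forall i j x, ple I i j -> c j (d i j x) = c i x).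

Definition is_colimit (K : aclass) (I : poset) (D : pcar I -> structure (voc K))
  (d : forall i j, carrier (D i) -> carrier (D j))
  (L : structure (voc K)) (c : forall i, carrier (D i) -> carrier L) : Prop :=
  is_cocone K I D d L c /\
  forall (P : structure (voc K)) (h : forall i, carrier (D i) -> carrier P),
    is_cocone K I D d P h ->
    (exists u, leK K L P u /\ forall i x, u (c i x) = h i x) /\
    (forall u u', leK K L P u -> leK K L P u' ->
       (forall i x, u (c i x) = h i x) -> (forall i x, u' (c i x) = h i x) ->
       forall y, u y = u' y).

Definition is_union (K : aclass) (I : poset) (D : pcar I -> structure (voc K))
  (d : forall i j, carrier (D i) -> carrier (D j))
  (N : structure (voc K)) (g : forall i, carrier (D i) -> carrier N) : Prop :=
  (forall i, emb (D i) N (g i)) /\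
  (forall i j x, ple I i j -> g j (d i j x) = g i x) /\
  (forall y, exists i x, g i x = y).

Definition coherence (K : aclass) : Prop :=
  forall (M0 M1 M2 : structure (voc K)) h g,
    emb M0 M1 h -> leK K M1 M2 g -> leK K M0 M2 (fun x => g (h x)) ->
    leK K M0 M1 h.

Definition chain_axioms (Mu : Type) (K : aclass) : Prop :=
  forall I D d N g,
    directed_lt Mu I -> is_system K I D d -> is_union K I D d N g ->
    inK K N /\
    (forall i, leK K (D i) N (g i)) /\
    (forall P h, (forall i, leK K (D i) P (h i)) ->
       forall u, (forall i x, u (g i x) = h i x) -> leK K N P u).

(* Lam0 witnesses the Löwenheim–Skolem–Tarski axiom:
   Lam0 = Lam0^{<Mu} >= |tau(K)| + Mu, and every A contained in some
   M0 <=_K M with |M0| <= |A|^{<Mu} + Lam0.  (Lam0 <= Lam0^{<Mu} is automatic.) *)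
Definition LS_witness (Mu : Type) (K : aclass) (Lam0 : Type) : Prop :=
  ub_pow Lam0 Mu Lam0 /\
  cle ((fsym (voc K) + rsym (voc K)) + Mu) Lam0 /\
  forall M, inK K M -> forall A : carrier M -> Prop,
    exists (M0 : structure (voc K)) h,
      leK K M0 M h /\ (forall x, A x -> exists y, h y = x) /\
      le_pow_lt_plus (carrier M0) {x | A x} Mu Lam0.

Definition muAEC (Mu : Type) (K : aclass) : Prop :=
  abstract_class Mu K /\ coherence K /\ chain_axioms Mu K /\
  exists Lam0 : Type, LS_witness Mu K Lam0.

(* M is Kap-presentable: Hom(M,-) preserves colimits of Kap-directed systems
   (the canonical map colim Hom(M, D i) -> Hom(M, L) is bijective) *)
Definition presentable (K : aclass) (Kap : Type) (M : structure (voc K)) : Prop :=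
  inK K M /\
  forall I D d L c,
    directed_lt Kap I -> is_system K I D d -> is_colimit K I D d L c ->
    (forall f, leK K M L f ->
       exists i g, leK K M (D i) g /\ forall x, c i (g x) = f x) /\
    (forall i i' g g', leK K M (D i) g -> leK K M (D i') g' ->
       (forall x, c i (g x) = c i' (g' x)) ->
       exists j, ple I i j /\ ple I i' j /\ forall x, d i j (g x) = d i' j (g' x)).

(* (<Lam^+)-presentable: Kap-presentable for some regular Kap < Lam^+ + aleph_1
   = Lam^+ (Lam infinite), i.e. some regular Kap <= Lam *)
Definition presentable_lt_succ (K : aclass) (Lam : Type) (M : structure (voc K)) : Prop :=
  exists Q : Lam -> Prop, regular_card {x | Q x} /\ presentable K {x | Q x} M.

Lemma sub_refl (I : poset) (P : pcar I -> Prop) (i : {i | P i}) :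
  ple I (proj1_sig i) (proj1_sig i).
Proof. apply ple_refl. Qed.
Lemma sub_trans (I : poset) (P : pcar I -> Prop) (i j k : {i | P i}) :
  ple I (proj1_sig i) (proj1_sig j) -> ple I (proj1_sig j) (proj1_sig k) ->
  ple I (proj1_sig i) (proj1_sig k).
Proof. apply ple_trans. Qed.
Lemma sub_anti (I : poset) (P : pcar I -> Prop) (i j : {i | P i}) :
  ple I (proj1_sig i) (proj1_sig j) -> ple I (proj1_sig j) (proj1_sig i) -> i = j.
Proof.
  destruct i as [i Hi], j as [j Hj]; simpl; intros H1 H2.
  pose proof (ple_anti I i j H1 H2) as E; subst j.
  f_equal; apply proof_irrelevance.
Qed.

Definition subposet (I : poset) (P : pcar I -> Prop) : poset :=
  Poset {i | P i} (fun i j => ple I (proj1_sig i) (proj1_sig j))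
    (sub_refl I P) (sub_trans I P) (sub_anti I P).

Definition boundedly_presentable_succ (K : aclass) (Lam : Type) (I : poset)
  (D : pcar I -> structure (voc K)) (d : forall i j, carrier (D i) -> carrier (D j)) : Prop :=
  forall P : pcar I -> Prop, (exists j, forall i, P i -> ple I i j) ->
    forall L c,
      is_colimit K (subposet I P) (fun i => D (proj1_sig i))
        (fun i j => d (proj1_sig i) (proj1_sig j)) L c ->
      presentable_lt_succ K Lam L.

Definition proper (K : aclass) (I : poset) (D : pcar I -> structure (voc K))
  (d : forall i j, carrier (D i) -> carrier (D j))
  (L : structure (voc K)) (c : forall i, carrier (D i) -> carrier L) : Prop :=
  ~ exists i g, leK K L (D i) g /\ forall y, c i (g y) = y.

(* Main.v *)
Require Import Defs.
From Stdlib Require Import Classical ClassicalEpsilon FunctionalExtensionality PropExtensionality ProofIrrelevance.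

Lemma pred_ext {T : Type} (S S' : T -> Prop) : (forall x, S x <-> S' x) -> S = S'.
Proof. intros H; apply functional_extensionality; intros x; apply propositional_extensionality; auto. Qed.

Lemma sig_ext {T : Type} (P : T -> Prop) (a b : {x | P x}) : proj1_sig a = proj1_sig b -> a = b.
Proof. destruct a, b; simpl; intros ->; f_equal; apply proof_irrelevance. Qed.

Definition xm (P : Prop) : {P} + {~ P} := excluded_middle_informative P.

Lemma cle_refl A : cle A A.
Proof. exists (fun x => x); intros x y H; exact H. Qed.

Lemma cle_trans A B C : cle A B -> cle B C -> cle A C.
Proof. intros [f Hf] [g Hg]; exists (fun x => g (f x)); intros x y H; auto. Qed.

Lemma clt_cle_trans A B C : clt A B -> cle B C -> (~ cle C A) -> clt A C.
Proof. intros [H1 H2] H3 H4; split; [eapply cle_trans; eauto| auto]. Qed.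

Lemma cle_clt_trans A B C : cle A B -> clt B C -> clt A C.
Proof. intros H1 [H2 H3]; split; [eapply cle_trans; eauto|]. intros H; apply H3; eapply cle_trans; eauto. Qed.

Lemma clt_le_trans A B C : clt A B -> cle B C -> clt A C \/ True.
Proof. auto. Qed.

Section Tower.
Variable T : Type.
Variable g : (T -> Prop) -> T.
Hypothesis gP : forall S : T -> Prop, (exists x, ~ S x) -> ~ S (g S).

Definition tsucc (S : T -> Prop) : T -> Prop := fun x => S x \/ x = g S.

Inductive tower : (T -> Prop) -> Prop :=
| tw_succ : forall S, tower S -> tower (tsucc S)
| tw_union : forall F : (T -> Prop) -> Prop, (forall S, F S -> tower S) ->
    tower (fun x => exists S, F S /\ S x).

Definition incl (S S' : T -> Prop) := forall x, S x -> S' x.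
Definition extreme (C : T -> Prop) := forall S, tower S -> incl S C -> ~ incl C S -> incl (tsucc S) C.

Lemma ext_eq (S S' : T -> Prop) : incl S S' -> incl S' S -> S = S'.
Proof. intros; apply pred_ext; split; auto. Qed.

Lemma lemma1 C : tower C -> extreme C -> forall S, tower S -> incl S C \/ incl (tsucc C) S.
Proof.
  intros TC EC S TS; induction TS as [S TS IH | F HF IH].
  - destruct IH as [H|H].
    + destruct (classic (incl C S)) as [H'|H'].
      * right. assert (S = C) by (apply ext_eq; auto). subst. intros x Hx; exact Hx.
      * left. apply EC; auto.
    + right. intros x Hx. left. auto.
  - destruct (classic (exists S, F S /\ ~ incl S C)) as [[S [FS NS]]|NS].
    + right. destruct (IH S FS) as [H|H]; [contradiction|]. intros x Hx. exists S; auto.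
    + left. intros x [S [FS Sx]]. destruct (classic (incl S C)) as [h|h]; [auto|].
      exfalso; apply NS; eauto.
Qed.

Lemma all_extreme C : tower C -> extreme C.
Proof.
  intros TC; induction TC as [C TC IH | F HF IH].
  - intros S TS H1 H2.
    destruct (lemma1 C TC IH S TS) as [H|H]; [|contradiction].
    destruct (classic (incl C S)) as [H'|H'].
    + assert (S = C) by (apply ext_eq; auto). subst. intros x Hx; exact Hx.
    + intros x Hx. left. exact (IH S TS H H' x Hx).
  - intros S TS H1 H2.
    apply not_all_ex_not in H2. destruct H2 as [y Hy].
    apply imply_to_and in Hy. destruct Hy as [[C [FC Cy]] Sy].
    destruct (lemma1 C (HF C FC) (IH C FC) S TS) as [H|H].
    + intros x Hx. exists C. split; auto. exact (IH C FC S TS H (fun Hc => Sy (Hc y Cy)) x Hx).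
    + exfalso. apply Sy. apply H. left. exact Cy.
Qed.

Lemma tower_chain S C : tower S -> tower C -> incl S C \/ incl C S.
Proof.
  intros TS TC. destruct (lemma1 C TC (all_extreme C TC) S TS) as [H|H]; auto.
  right. intros x Hx. apply H. left. auto.
Qed.

Definition tunion (F : (T -> Prop) -> Prop) : T -> Prop := fun x => exists S, F S /\ S x.

Definition Sx (x : T) : T -> Prop := tunion (fun S => tower S /\ ~ S x).

Lemma Sx_tower x : tower (Sx x).
Proof. apply tw_union. intros S [H _]; auto. Qed.

Lemma Sx_not x : ~ Sx x x.
Proof. intros [S [[_ H] H']]; auto. Qed.

Lemma Sx_g x : g (Sx x) = x.
Proof.
  destruct (classic (tsucc (Sx x) x)) as [[H|H]|H].
  - exfalso; apply (Sx_not x H).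
  - auto.
  - exfalso. assert (Hin : incl (tsucc (Sx x)) (Sx x)).
    { intros y Hy. exists (tsucc (Sx x)). split; [split; [apply tw_succ, Sx_tower| auto]|auto]. }
    apply (gP (Sx x)). { exists x. apply Sx_not. }
    apply Hin. right. auto.
Qed.

Definition WR (x y : T) : Prop := exists S, tower S /\ S x /\ ~ S y.

Lemma WR_irrefl x : ~ WR x x.
Proof. intros [S [_ [H H']]]; auto. Qed.

Lemma WR_trans x y z : WR x y -> WR y z -> WR x z.
Proof.
  intros [S1 [T1 [A1 B1]]] [S2 [T2 [A2 B2]]].
  destruct (tower_chain S1 S2 T1 T2) as [H|H].
  - exists S2; auto.
  - exfalso; auto.
Qed.

Lemma WR_total x y : x <> y -> WR x y \/ WR y x.
Proof.
  intros Hxy.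
  assert (Hgen : forall x y, x <> y -> incl (Sx x) (Sx y) -> WR x y).
  { clear x y Hxy. intros x y Hxy Hi.
    destruct (tower_chain (tsucc (Sx x)) (Sx y) (tw_succ _ (Sx_tower x)) (Sx_tower y)) as [H|H].
    - exists (Sx y). split; [apply Sx_tower|]. split; [|apply Sx_not].
      apply H. right. symmetry; apply Sx_g.
    - destruct (classic (Sx y x)) as [Hx|Hx].
      + exists (Sx y). split; [apply Sx_tower|]. split; [auto|apply Sx_not].
      + exfalso. apply Hxy.
        assert (E : Sx x = Sx y).
        { apply ext_eq; auto. intros z Hz. destruct (H z Hz) as [h|h]; auto.
          subst z. rewrite Sx_g in Hz. contradiction. }
        rewrite <- (Sx_g x), <- (Sx_g y), E. reflexivity. }
  destruct (tower_chain (Sx x) (Sx y) (Sx_tower x) (Sx_tower y)) as [H|H].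
  - left; auto.
  - right; auto.
Qed.

Lemma WR_least (A : T -> Prop) : (exists a, A a) -> exists m, A m /\ forall w, A w -> ~ WR w m.
Proof.
  intros [a Aa].
  set (S0 := tunion (fun S => tower S /\ forall z, S z -> ~ A z)).
  assert (TS0 : tower S0). { apply tw_union. intros S [H _]; auto. }
  assert (DS0 : forall z, S0 z -> ~ A z). { intros z [S [[_ H] H']]; eauto. }
  assert (Ng : ~ S0 (g S0)). { apply gP. exists a. intros H; apply (DS0 a H Aa). }
  assert (Ag : A (g S0)).
  { apply NNPP; intros Hn.
    apply Ng. exists (tsucc S0). split.
    - split. apply tw_succ; auto. intros z [Hz|Hz]; [apply DS0; auto| subst; auto].
    - right; auto. }
  exists (g S0). split; auto.
  intros w Aw [S [TSS [Sw NSg]]].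
  destruct (tower_chain S S0 TSS TS0) as [H|H].
  - apply (DS0 w (H w Sw) Aw).
  - destruct (tower_chain (tsucc S0) S (tw_succ _ TS0) TSS) as [H'|H'].
    + apply NSg, H'. right; auto.
    + destruct (H' w Sw) as [h|h]. apply (DS0 w h Aw). subst w. contradiction.
Qed.

End Tower.

Record wo (T : Type) := WO {
  wlt : T -> T -> Prop;
  wlt_irrefl : forall x, ~ wlt x x;
  wlt_trans : forall x y z, wlt x y -> wlt y z -> wlt x z;
  wlt_total : forall x y, x <> y -> wlt x y \/ wlt y x;
  wlt_least : forall A : T -> Prop, (exists a, A a) -> exists m, A m /\ forall w, A w -> ~ wlt w m }.
Arguments wlt {T}.

Theorem well_ordering (T : Type) : inhabited (wo T).
Proof.
  destruct (classic (inhabited T)) as [[t0]|NT].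
  - set (g := fun S : T -> Prop => epsilon (inhabits t0) (fun x => ~ S x)).
    assert (gP : forall S : T -> Prop, (exists x, ~ S x) -> ~ S (g S)).
    { intros S H. apply (epsilon_spec (inhabits t0) (fun x => ~ S x) H). }
    constructor. exact (WO T (WR T g) (WR_irrefl T g) (WR_trans T g) (WR_total T g gP) (WR_least T g gP)).
  - constructor. refine (WO T (fun _ _ => False) _ _ _ _);
    try (intros x; exfalso; apply NT; constructor; exact x);
    try (intros A [a _]; exfalso; apply NT; constructor; exact a).
Qed.

Lemma wo_wf {T} (R : wo T) : well_founded (wlt R).
Proof.
  intros x. apply NNPP; intros H.
  destruct (wlt_least T R (fun y => ~ Acc (wlt R) y)) as [m [Hm Hmin]]; [eauto|].
  apply Hm. constructor. intros y Hy. apply NNPP; intros Hy'. apply (Hmin y Hy' Hy).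
Qed.

Lemma wf_rec {A X : Type} (R : A -> A -> Prop) (wf : well_founded R)
  (step : forall a, (forall a', R a' a -> X) -> X) :
  exists f : A -> X, forall a, f a = step a (fun a' _ => f a').
Proof.
  exists (Fix wf (fun _ => X) step). intros a.
  rewrite Fix_eq. reflexivity.
  intros x f f' H. assert (E : f = f').
  { apply functional_extensionality_dep; intros y; apply functional_extensionality; intros p; auto. }
  rewrite E; reflexivity.
Qed.

Lemma choose {A} (P : A -> Prop) : (exists x, P x) -> {x | P x}.
Proof. apply constructive_indefinite_description. Qed.

Theorem comparability (A B : Type) : cle A B \/ cle B A.
Proof.
  destruct (well_ordering A) as [R].
  destruct (classic (inhabited B)) as [[b0]|NB].
  2:{ destruct (classic (inhabited A)) as [[a0]|NA].
      - right. exists (fun b => False_rect _ (NB (inhabits b))). intros x; exfalso; apply NB; constructor; auto.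
      - left. exists (fun a => False_rect _ (NA (inhabits a))). intros x; exfalso; apply NA; constructor; auto. }
  set (step := fun (a : A) (rec : forall a', wlt R a' a -> option B) =>
    match xm (exists b, forall a' (H : wlt R a' a), rec a' H <> Some b) with
    | left H => Some (proj1_sig (choose _ H))
    | right _ => None end).
  destruct (wf_rec (wlt R) (wo_wf R) step) as [f Hf].
  destruct (classic (exists a, f a = None)) as [[a Ha]|Hn].
  - right. rewrite Hf in Ha. unfold step in Ha.
    destruct (xm _) as [H|H]; [discriminate|].
    assert (Hb : forall b, exists a', wlt R a' a /\ f a' = Some b).
    { intros b. apply NNPP; intros Hb. apply H. exists b. intros a' Ha' E. apply Hb; eauto. }
    exists (fun b => proj1_sig (choose _ (Hb b))).
    intros x y E. pose proof (proj2_sig (choose _ (Hb x))) as [_ Ex].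
    pose proof (proj2_sig (choose _ (Hb y))) as [_ Ey]. simpl in E. rewrite E in Ex. congruence.
  - left. exists (fun a => match f a with Some b => b | None => b0 end).
    assert (HS : forall a, exists b, f a = Some b /\ forall a', wlt R a' a -> f a' <> Some b).
    { intros a. destruct (f a) eqn:E.
      - exists b. split; auto. rewrite Hf in E. unfold step in E. destruct (xm _) as [H|H]; [|discriminate].
        destruct (choose _ H) as [b' Hb']. simpl in E. inversion E; subst. intros a' Ha'. apply (Hb' a' Ha').
      - exfalso; apply Hn; eauto. }
    intros x y E. apply NNPP; intros Nxy.
    destruct (HS x) as [bx [Ex Fx]]. destruct (HS y) as [by' [Ey Fy]].
    rewrite Ex, Ey in E. subst by'.
    destruct (wlt_total A R x y Nxy) as [H|H].
    + apply (Fy x H). congruence.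
    + apply (Fx y H). congruence.
Qed.


Lemma nat_not_bool : ~ cle nat bool.
Proof.
  intros [f Hf].
  destruct (f 0) eqn:E0, (f 1) eqn:E1, (f 2) eqn:E2;
  try (assert (0 = 1) by (apply Hf; congruence); discriminate);
  try (assert (0 = 2) by (apply Hf; congruence); discriminate);
  try (assert (1 = 2) by (apply Hf; congruence); discriminate).
Qed.

Lemma infinite_not_bool X : cle nat X -> ~ cle X bool.
Proof. intros H1 H2. apply nat_not_bool. eapply cle_trans; eauto. Qed.

Lemma infinite_two X : cle nat X -> exists a b : X, a <> b.
Proof. intros [f Hf]. exists (f 0), (f 1). intros E. apply Hf in E. discriminate. Qed.

Lemma cle_sub {T} (P : T -> Prop) : cle {x | P x} T.
Proof. exists (@proj1_sig _ _). intros a b E. apply sig_ext; auto. Qed.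

Lemma cle_sub_mono {T} (P Q : T -> Prop) : (forall x, P x -> Q x) -> cle {x | P x} {x | Q x}.
Proof. intros H. exists (fun a => exist _ (proj1_sig a) (H _ (proj2_sig a))). intros a b E.
  apply sig_ext. apply (f_equal (@proj1_sig _ _)) in E. exact E. Qed.

Lemma cle_image {X T} (f : X -> T) : injective f -> cle X {t | exists x, f x = t}.
Proof. intros Hf. exists (fun x => exist _ (f x) (ex_intro _ x eq_refl)). intros a b E.
  apply Hf. apply (f_equal (@proj1_sig _ _)) in E. exact E. Qed.

Lemma cle_image_back {X T} (f : X -> T) : cle {t | exists x, f x = t} X.
Proof.
  exists (fun t : {t | exists x, f x = t} => proj1_sig (choose (fun x => f x = proj1_sig t) (proj2_sig t))).
  intros a b E. apply sig_ext.
  rewrite <- (proj2_sig (choose (fun x => f x = proj1_sig a) (proj2_sig a))),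
          <- (proj2_sig (choose (fun x => f x = proj1_sig b) (proj2_sig b))), E. reflexivity.
Qed.

Lemma cle_bool_of_sub {X} (f : X -> bool) : (forall x y, f x = f y -> x = y) -> cle X bool.
Proof. intros H; exists f; exact H. Qed.

Section Card.
Variables Mu Lam : Type.
Hypothesis HMu : regular_card Mu.
Hypothesis Hcl : mu_closed Mu Lam.
Hypothesis HML : cle Mu Lam.

Definition smallL (S : Lam -> Prop) := clt {x | S x} Lam.
Definition Sm (X : Type) := exists S, smallL S /\ cle X {x | S x}.

Lemma nat_Mu : cle nat Mu.
Proof. destruct HMu as [H _]. exact H. Qed.

Lemma nat_Lam : cle nat Lam.
Proof. eapply cle_trans; [apply nat_Mu| exact HML]. Qed.

Lemma Sm_le X Y : cle X Y -> Sm Y -> Sm X.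
Proof. intros H [S [H1 H2]]. exists S; split; auto. eapply cle_trans; eauto. Qed.

Lemma Sm_not X : Sm X -> ~ cle Lam X.
Proof. intros [S [[_ H1] H2]] H. apply H1. eapply cle_trans; eauto. Qed.

Lemma small_of_bool S : cle {x | S x} bool -> smallL S.
Proof. intros H. split; [apply cle_sub|]. intros H'. apply (infinite_not_bool Lam nat_Lam).
  eapply cle_trans; eauto. Qed.

Lemma Sm_bool : Sm bool.
Proof.
  destruct (infinite_two Lam nat_Lam) as [a [b Hab]].
  exists (fun x => x = a \/ x = b). split.
  - apply small_of_bool. exists (fun x => if xm (proj1_sig x = a) then true else false).
    intros [x Hx] [y Hy]; simpl. destruct (xm (x = a)), (xm (y = a)); intros E; try discriminate;
    apply sig_ext; simpl; destruct Hx, Hy; congruence.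
  - exists (fun t : bool => if t then exist (fun x => x = a \/ x = b) a (or_introl eq_refl)
                        else exist (fun x => x = a \/ x = b) b (or_intror eq_refl)).
    intros [|] [|] E; auto; apply (f_equal (@proj1_sig _ _)) in E; simpl in E; congruence.
Qed.

Lemma two_Mu : exists m0 m1 : Mu, m0 <> m1 /\ clt {x | x = m0 \/ x = m1} Mu.
Proof.
  destruct (infinite_two Mu nat_Mu) as [a [b Hab]]. exists a, b. split; auto.
  split; [apply cle_sub|]. intros H. apply (infinite_not_bool Mu nat_Mu).
  eapply cle_trans; [exact H|].
  exists (fun x => if xm (proj1_sig x = a) then true else false).
  intros [x Hx] [y Hy]; simpl. destruct (xm (x = a)), (xm (y = a)); intros E; try discriminate;
  apply sig_ext; simpl; destruct Hx, Hy; congruence.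
Qed.

Lemma prod_pow2 (m0 m1 : Mu) (X : Type) : m0 <> m1 -> cle (X * X) ({x | x = m0 \/ x = m1} -> X).
Proof.
  intros Hm. exists (fun p k => if xm (proj1_sig k = m0) then fst p else snd p).
  intros [a b] [c d] E.
  pose proof (f_equal (fun h => h (exist (fun x => x = m0 \/ x = m1) m0 (or_introl eq_refl))) E) as E1.
  pose proof (f_equal (fun h => h (exist (fun x => x = m0 \/ x = m1) m1 (or_intror eq_refl))) E) as E2.
  simpl in E1, E2. destruct (xm (m0 = m0)); [|congruence]. destruct (xm (m1 = m0)); [congruence|].
  simpl in *; congruence.
Qed.

Lemma pow_small S (P : Mu -> Prop) : smallL S -> clt {x | P x} Mu ->
  exists W, smallL W /\ cle ({x | P x} -> {x | S x}) {x | W x}.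
Proof.
  intros HS HP. destruct (Hcl S HS) as [W [HW Hub]]. exists W; split; auto.
Qed.

Lemma pow_small_unif S : smallL S ->
  exists W, smallL W /\ forall P : Mu -> Prop, clt {x | P x} Mu -> cle ({x | P x} -> {x | S x}) {x | W x}.
Proof. intros HS. destruct (Hcl S HS) as [W [HW Hub]]. exists W; split; auto. Qed.

Lemma small_le S W : smallL W -> cle {x | S x} {x | W x} -> smallL S.
Proof. intros [_ H1] H. split; [apply cle_sub|]. intros H'. apply H1. eapply cle_trans; eauto. Qed.

Lemma small_union S1 S2 : smallL S1 -> smallL S2 -> smallL (fun x => S1 x \/ S2 x).
Proof.
  assert (Hgen : forall S1 S2, smallL S1 -> smallL S2 -> cle {x | S1 x} {x | S2 x} ->
            smallL (fun x => S1 x \/ S2 x)).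
  { clear S1 S2. intros S1 S2 H1 H2 [e He].
    destruct (classic (exists a b : {x | S2 x}, a <> b)) as [[b0 [b1 Hb]]|Hn].
    - destruct two_Mu as [m0 [m1 [Hm HP]]].
      destruct (pow_small S2 _ H2 HP) as [W [HW [iw Hiw]]].
      apply (small_le _ W HW).
      eapply cle_trans; [|exists iw; exact Hiw].
      exists (fun u : {x | S1 x \/ S2 x} => fun k : {x | x = m0 \/ x = m1} =>
        if xm (proj1_sig k = m0) then
          (match xm (S2 (proj1_sig u)) with
           | left h => exist _ (proj1_sig u) h
           | right h => e (exist _ (proj1_sig u) (match proj2_sig u with or_introl a => a | or_intror b => False_ind _ (h b) end)) end)
        else (if xm (S2 (proj1_sig u)) then b0 else b1)).
      intros u v E.
      pose proof (f_equal (fun h => h (exist (fun x => x = m0 \/ x = m1) m0 (or_introl eq_refl))) E) as E1.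
      pose proof (f_equal (fun h => h (exist (fun x => x = m0 \/ x = m1) m1 (or_intror eq_refl))) E) as E2.
      simpl in E1, E2. destruct (xm (m0 = m0)) as [_|]; [|congruence]. destruct (xm (m1 = m0)); [congruence|].
      destruct (xm (S2 (proj1_sig u))) as [hu|hu], (xm (S2 (proj1_sig v))) as [hv|hv]; try congruence.
      + apply sig_ext. apply (f_equal (@proj1_sig _ _)) in E1. exact E1.
      + apply He in E1. apply sig_ext. apply (f_equal (@proj1_sig _ _)) in E1. exact E1.
    - apply small_of_bool.
      exists (fun u => if xm (S2 (proj1_sig u)) then true else false).
      intros [u Hu] [v Hv]; simpl.
      destruct (xm (S2 u)) as [hu|hu], (xm (S2 v)) as [hv|hv]; intros E; try discriminate.
      + apply sig_ext; simpl. apply NNPP; intros Ne. apply Hn.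
        exists (exist _ u hu), (exist _ v hv). intros E'. apply Ne. apply (f_equal (@proj1_sig _ _)) in E'. exact E'.
      + destruct Hu as [hu'|]; [|contradiction]. destruct Hv as [hv'|]; [|contradiction].
        assert (E' : e (exist _ u hu') = e (exist _ v hv')).
        { apply NNPP; intros Ne. apply Hn. eauto. }
        apply He in E'. apply sig_ext. apply (f_equal (@proj1_sig _ _)) in E'. exact E'. }
  intros H1 H2. destruct (comparability {x | S1 x} {x | S2 x}) as [H|H].
  - apply Hgen; auto.
  - assert (E : (fun x => S1 x \/ S2 x) = (fun x => S2 x \/ S1 x)).
    { apply pred_ext; intros; tauto. }
    rewrite E. apply Hgen; auto.
Qed.

Lemma Sm_prod X Y : Sm X -> Sm Y -> Sm (X * Y).
Proof.
  intros [S1 [H1 [e1 He1]]] [S2 [H2 [e2 He2]]].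
  pose proof (small_union S1 S2 H1 H2) as HU.
  destruct two_Mu as [m0 [m1 [Hm HP]]].
  destruct (pow_small _ _ HU HP) as [W [HW HWc]].
  exists W; split; auto.
  eapply cle_trans; [|exact HWc]. eapply cle_trans; [|apply (prod_pow2 m0 m1 _ Hm)].
  exists (fun p => (exist (fun x => S1 x \/ S2 x) (proj1_sig (e1 (fst p))) (or_introl (proj2_sig (e1 (fst p)))),
                  exist (fun x => S1 x \/ S2 x) (proj1_sig (e2 (snd p))) (or_intror (proj2_sig (e2 (snd p)))))).
  intros [a b] [c d] E. inversion E as [[Ea Eb]].
  assert (e1 a = e1 c) by (apply sig_ext; auto). assert (e2 b = e2 d) by (apply sig_ext; auto).
  f_equal; auto.
Qed.

Lemma Sm_sum X Y : Sm X -> Sm Y -> Sm (X + Y).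
Proof.
  intros [S1 [H1 [e1 He1]]] [S2 [H2 [e2 He2]]].
  pose proof (small_union S1 S2 H1 H2) as HU.
  apply (Sm_le _ ({x | S1 x \/ S2 x} * bool)).
  - exists (fun s => match s with
      | inl a => (exist (fun x => S1 x \/ S2 x) (proj1_sig (e1 a)) (or_introl (proj2_sig (e1 a))), true)
      | inr b => (exist (fun x => S1 x \/ S2 x) (proj1_sig (e2 b)) (or_intror (proj2_sig (e2 b))), false) end).
    intros [a|b] [c|d] E; inversion E as [[Ea]]; f_equal.
    + apply He1, sig_ext; auto.
    + apply He2, sig_ext; auto.
  - apply Sm_prod; [|apply Sm_bool]. exists (fun x => S1 x \/ S2 x). split; auto. apply cle_refl.
Qed.

Lemma Sm_pow X : Sm X -> exists W, smallL W /\ forall P : Mu -> Prop, clt {x | P x} Mu -> cle ({x | P x} -> X) {x | W x}.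
Proof.
  intros [S [HS [e He]]]. destruct (pow_small_unif S HS) as [W [HW Hc]].
  exists W; split; auto. intros P HP. eapply cle_trans; [|apply (Hc P HP)].
  exists (fun f x => e (f x)). intros f g E. apply functional_extensionality; intros x.
  apply He. exact (f_equal (fun h => h x) E).
Qed.

Lemma Sm_subset S : smallL S -> Sm {x | S x}.
Proof. intros H; exists S; split; auto; apply cle_refl. Qed.

End Card.


Section AEC.
Variable Mu : Type.
Variable K : aclass.
Hypothesis HA : abstract_class Mu K.
Hypothesis HCh : chain_axioms Mu K.
Hypothesis Hnat : cle nat Mu.

Lemma farity_small f : clt (farity (voc K) f) Mu.
Proof. destruct HA as [H _]; auto. Qed.
Lemma leK_props M N h : leK K M N h -> inK K M /\ inK K N /\ emb M N h.
Proof. destruct HA as [_ [_ [_ [H _]]]]; auto. Qed.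
Lemma leK_emb M N h : leK K M N h -> emb M N h.
Proof. intros H; apply (leK_props M N h H). Qed.
Lemma leK_refl M : inK K M -> leK K M M (fun x => x).
Proof. destruct HA as [_ [_ [_ [_ [H _]]]]]; auto. Qed.
Lemma leK_trans M N P f g : leK K M N f -> leK K N P g -> leK K M P (fun x => g (f x)).
Proof. destruct HA as [_ [_ [_ [_ [_ [H _]]]]]]; eauto. Qed.
Lemma leK_iso M M' N N' f g h : leK K M N f -> iso M' M g -> iso N N' h ->
      leK K M' N' (fun x => h (f (g x))).
Proof. destruct HA as [_ [_ [_ [_ [_ [_ H]]]]]]; eauto. Qed.
Lemma leK_ext M N f f' : leK K M N f -> (forall x, f x = f' x) -> leK K M N f'.
Proof. intros H E. assert (f = f') by (apply functional_extensionality; auto). subst; auto. Qed.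

Lemma pair_small {T} (a b : T) : clt {x | x = a \/ x = b} Mu -> True.
Proof. auto. Qed.

Lemma directed_pair (I : poset) : directed_lt Mu I -> forall i j : pcar I,
  exists k, ple I i k /\ ple I j k.
Proof.
  intros HD i j.
  destruct (HD (fun x => x = i \/ x = j)) as [k Hk].
  - split.
    + eapply cle_trans; [exists (fun x : {x | x = i \/ x = j} => if xm (proj1_sig x = i) then true else false)|].
      * intros [x Hx] [y Hy]; simpl. destruct (xm (x = i)), (xm (y = i)); intros E; try discriminate;
        apply sig_ext; simpl; destruct Hx, Hy; congruence.
      *
        destruct (infinite_two Mu Hnat) as [m0 [m1 Hm]].
        exists (fun t : bool => if t then m0 else m1). intros [|] [|]; auto; intros; congruence.
    + intros H. apply (infinite_not_bool Mu Hnat). eapply cle_trans; [exact H|].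
      exists (fun x : {x | x = i \/ x = j} => if xm (proj1_sig x = i) then true else false).
      intros [x Hx] [y Hy]; simpl. destruct (xm (x = i)), (xm (y = i)); intros E; try discriminate;
      apply sig_ext; simpl; destruct Hx, Hy; congruence.
  - exists k; auto.
Qed.

Lemma union_colimit I D d N g :
  directed_lt Mu I -> is_system K I D d -> is_union K I D d N g -> is_colimit K I D d N g.
Proof.
  intros HD HS HU.
  destruct (HCh I D d N g HD HS HU) as [HN [HleK Huniv]].
  destruct HU as [Hemb [Hcomp Hcov]].
  split.
  - split; auto.
  - intros P h [HP [HhK Hhc]].
    set (u := fun y : carrier N => let p := choose _ (Hcov y) in
                h (proj1_sig p) (proj1_sig (choose _ (proj2_sig p)))).
    assert (Hu : forall i x, u (g i x) = h i x).
    { intros i x. unfold u.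
      destruct (choose _ (Hcov (g i x))) as [i' Hi']. simpl.
      destruct (choose _ Hi') as [x' Hx']. simpl.
      destruct (directed_pair I HD i i') as [k [Hik Hi'k]].
      assert (E : d i k x = d i' k x').
      { destruct (Hemb k) as [Hinj _]. apply Hinj. rewrite Hcomp, Hcomp; auto. }
      rewrite <- (Hhc i k x Hik), <- (Hhc i' k x' Hi'k), E. reflexivity. }
    split.
    + exists u. split; auto. apply (Huniv P h HhK u Hu).
    + intros v v' _ _ Hv Hv' y. destruct (Hcov y) as [i [x <-]]. rewrite Hv, Hv'. reflexivity.
Qed.

Section UnionIn.
Variables (I : poset) (D : pcar I -> structure (voc K)) (d : forall i j, carrier (D i) -> carrier (D j)).
Variables (L : structure (voc K)) (c : forall i, carrier (D i) -> carrier L).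
Hypothesis HD : directed_lt Mu I.
Hypothesis HS : is_system K I D d.
Hypothesis Hc : forall i, leK K (D i) L (c i).
Hypothesis Hcc : forall i j x, ple I i j -> c j (d i j x) = c i x.

Definition inU (y : carrier L) := exists i x, c i x = y.

Lemma inU_fint f (xs : farity (voc K) f -> {y | inU y}) :
  inU (fint L f (fun a => proj1_sig (xs a))).
Proof.
  set (idx := fun a => proj1_sig (choose _ (proj2_sig (xs a)))).
  destruct (HD (fun j => exists a, idx a = j)) as [k Hk].
  - apply (cle_clt_trans _ (farity (voc K) f)); [apply cle_image_back| apply farity_small].
  - assert (Ha : forall a, exists z, c k z = proj1_sig (xs a)).
    { intros a. pose proof (proj2_sig (choose _ (proj2_sig (xs a)))) as [x Hx]. simpl in Hx.
      exists (d (idx a) k x). rewrite Hcc; [exact Hx|]. apply Hk. eauto. }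
    set (z := fun a => proj1_sig (choose _ (Ha a))).
    exists k, (fint (D k) f z).
    destruct (leK_emb _ _ _ (Hc k)) as [_ [Hf _]]. rewrite Hf. f_equal.
    apply functional_extensionality; intros a. unfold z. exact (proj2_sig (choose _ (Ha a))).
Qed.

Definition Ustr : structure (voc K) :=
  Struct (voc K) {y | inU y}
    (fun f xs => exist _ (fint L f (fun a => proj1_sig (xs a))) (inU_fint f xs))
    (fun r xs => rint L r (fun a => proj1_sig (xs a))).

Definition gU i (x : carrier (D i)) : carrier Ustr := exist inU (c i x) (ex_intro _ i (ex_intro _ x eq_refl)).

Lemma Ustr_union : is_union K I D d Ustr gU.
Proof.
  split; [|split].
  - intros i. destruct (leK_emb _ _ _ (Hc i)) as [Hi [Hf Hr]]. split; [|split].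
    + intros x y E. apply Hi. apply (f_equal (@proj1_sig _ _)) in E. exact E.
    + intros f xs. apply sig_ext. simpl. apply Hf.
    + intros r xs. simpl. apply Hr.
  - intros i j x Hij. apply sig_ext. simpl. auto.
  - intros [y [i [x Hx]]]. exists i, x. apply sig_ext. simpl. auto.
Qed.

Lemma colimit_covered : is_colimit K I D d L c -> forall y, exists i x, c i x = y.
Proof.
  intros [[HL [HcK Hcomp]] Huniv].
  destruct (HCh I D d Ustr gU HD HS Ustr_union) as [HUK [HgK Hun]].
  assert (HUL : leK K Ustr L (@proj1_sig _ _)).
  { apply (Hun L c Hc). intros; reflexivity. }
  destruct (Huniv Ustr gU) as [[u [HuK Hu]] _].
  { split; auto. split; auto. intros i j x Hij. apply sig_ext; simpl; auto. }
  destruct (Huniv L c) as [_ Huniq].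
  { split; auto. }
  assert (E : forall y, proj1_sig (u y) = y).
  { intros y. apply (Huniq (fun y => proj1_sig (u y)) (fun y => y)).
    - apply (leK_trans _ _ _ _ _ HuK HUL).
    - apply leK_refl; auto.
    - intros i x. rewrite Hu. reflexivity.
    - intros; reflexivity. }
  intros y. rewrite <- (E y). exact (proj2_sig (u y)).
Qed.

End UnionIn.

Lemma split_of_surj M N (c : carrier M -> carrier N) :
  leK K M N c -> (forall y, exists x, c x = y) -> exists g, leK K N M g /\ forall y, c (g y) = y.
Proof.
  intros H Hs.
  set (g := fun y => proj1_sig (choose _ (Hs y))).
  assert (Hg : forall y, c (g y) = y) by (intros y; exact (proj2_sig (choose _ (Hs y)))).
  destruct (leK_emb _ _ _ H) as [Hi [Hf Hr]].
  assert (Iso : iso N M g).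
  { split; [split; [|split]|].
    - intros x y E. rewrite <- (Hg x), <- (Hg y), E. reflexivity.
    - intros f xs. apply Hi. rewrite Hf, Hg. f_equal. apply functional_extensionality; intros a. rewrite Hg; auto.
    - intros r xs. rewrite Hr. assert (E : (fun a => c (g (xs a))) = xs).
      { apply functional_extensionality; intros a; apply Hg. } rewrite E. tauto.
    - intros x. exists (c x). apply Hi. apply Hg. }
  exists g. split; auto.
  apply (leK_ext _ _ _ _ (leK_iso _ _ _ _ _ _ _ H Iso Iso)).
  intros y. simpl. rewrite Hg. reflexivity.
Qed.

End AEC.


Section SizeLemma.
Variable Mu : Type.
Variable K : aclass.
Hypothesis HA : abstract_class Mu K.
Hypothesis HCh : chain_axioms Mu K.
Hypothesis HCoh : coherence K.
Hypothesis Hnat : cle nat Mu.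
Variable Lam0 : Type.
Hypothesis HLST : forall M, inK K M -> forall A : carrier M -> Prop,
    exists (M0 : structure (voc K)) h,
      leK K M0 M h /\ (forall x, A x -> exists y, h y = x) /\
      le_pow_lt_plus (carrier M0) {x | A x} Mu Lam0.
Variable Kap : Type.
Variable SS : Type -> Prop.
Hypothesis SS_le : forall X Y, cle X Y -> SS Y -> SS X.
Hypothesis SS_union : forall (J : Type) (F : J -> Type), (clt J Kap \/ clt J Mu) ->
   (forall j, SS (F j)) -> SS {j : J & F j}.
Hypothesis SS_hull : forall B, SS B -> exists Q : {P : Mu -> Prop & ({x | P x} -> B)} -> Prop,
   ub_pow B Mu {s | Q s} /\ SS ({s | Q s} + Lam0).
Hypothesis SS_unit : SS unit.

Variable M : structure (voc K).
Hypothesis HM : inK K M.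
Variable m0 : carrier M.

Definition closedS (S : carrier M -> Prop) :=
  forall f (xs : farity (voc K) f -> carrier M), (forall a, S (xs a)) -> S (fint M f xs).

Definition sub (S : carrier M -> Prop) (HS : closedS S) : structure (voc K) :=
  Struct (voc K) {x | S x}
    (fun f xs => exist _ (fint M f (fun a => proj1_sig (xs a))) (HS f _ (fun a => proj2_sig (xs a))))
    (fun r xs => rint M r (fun a => proj1_sig (xs a))).

Definition Jgood (S : carrier M -> Prop) :=
  closedS S /\ (forall HS : closedS S, leK K (sub S HS) M (@proj1_sig _ _)) /\ SS {x | S x} /\ (exists x, S x).

Lemma iso_id (N : structure (voc K)) : iso N N (fun x => x).
Proof. split; [split; [|split]|]. - intros a b E; exact E. - intros; reflexivity. - intros; tauto. - intros x; exists x; reflexivity. Qed.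

Lemma hull (A : carrier M -> Prop) : SS {x | A x} -> (exists x, A x) ->
  exists S, Jgood S /\ forall x, A x -> S x.
Proof.
  intros HSA [x0 Hx0].
  destruct (HLST M HM A) as [M0 [h [Hh [HAh Hsz]]]].
  destruct (leK_emb Mu K HA _ _ _ Hh) as [Hi [Hf Hr]].
  set (S := fun y => exists z, h z = y).
  assert (HS : closedS S).
  { intros f xs Hxs. set (z := fun a => proj1_sig (choose _ (Hxs a))).
    exists (fint M0 f z). rewrite Hf. f_equal. apply functional_extensionality; intros a.
    exact (proj2_sig (choose _ (Hxs a))). }
  exists S. split; [|intros x Hx; apply HAh; auto].
  set (hinv := fun y : {y | S y} => proj1_sig (choose _ (proj2_sig y))).
  assert (Hhinv : forall y, h (hinv y) = proj1_sig y) by (intros y; exact (proj2_sig (choose _ (proj2_sig y)))).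
  assert (Iso : forall HS', iso (sub S HS') M0 hinv).
  { intros HS'. split; [split; [|split]|].
    - intros a b E. apply sig_ext. rewrite <- Hhinv, <- (Hhinv b), E. reflexivity.
    - intros f xs. apply Hi. rewrite Hf, Hhinv. simpl. f_equal. apply functional_extensionality; intros a.
      rewrite Hhinv. reflexivity.
    - intros r xs. simpl. rewrite Hr. assert (E : (fun a => h (hinv (xs a))) = (fun a => proj1_sig (xs a))).
      { apply functional_extensionality; intros a; apply Hhinv. } rewrite E. tauto.
    - intros z. exists (exist S (h z) (ex_intro _ z eq_refl)). apply Hi. rewrite Hhinv. reflexivity. }
  split; [exact HS|split; [|split]].
  - intros HS'. apply (leK_ext K _ _ _ _ (leK_iso Mu K HA _ _ _ _ _ _ _ Hh (Iso HS') (iso_id M))).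
    intros y. apply Hhinv.
  - destruct (SS_hull _ HSA) as [Q [HQ HQS]].
    apply (SS_le _ (carrier M0)).
    + exists hinv. intros a b E. apply sig_ext. rewrite <- Hhinv, <- (Hhinv b), E. reflexivity.
    + apply (SS_le _ _ (Hsz Q HQ) HQS).
  - destruct (HAh x0 Hx0) as [z Hz]. exists x0, z; auto.
Qed.

Definition Jt := {S : carrier M -> Prop | Jgood S}.

Lemma Jle_refl (i : Jt) : (fun i j : Jt => forall x, proj1_sig i x -> proj1_sig j x) i i.
Proof. simpl; auto. Qed.
Lemma Jle_trans (i j k : Jt) : (forall x, proj1_sig i x -> proj1_sig j x) ->
  (forall x, proj1_sig j x -> proj1_sig k x) -> forall x, proj1_sig i x -> proj1_sig k x.
Proof. auto. Qed.
Lemma Jle_anti (i j : Jt) : (forall x, proj1_sig i x -> proj1_sig j x) ->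
  (forall x, proj1_sig j x -> proj1_sig i x) -> i = j.
Proof. intros H1 H2. apply sig_ext. apply pred_ext; split; auto. Qed.

Definition Jposet : poset :=
  Poset Jt (fun i j => forall x, proj1_sig i x -> proj1_sig j x) Jle_refl Jle_trans Jle_anti.

Definition JD (s : Jt) : structure (voc K) := sub (proj1_sig s) (proj1 (proj2_sig s)).

Definition Jwit (s : Jt) : carrier (JD s) :=
  let H := proj2 (proj2 (proj2 (proj2_sig s))) in
  exist _ (proj1_sig (choose _ H)) (proj2_sig (choose _ H)).

Definition Jd (s s' : Jt) (x : carrier (JD s)) : carrier (JD s') :=
  match xm (proj1_sig s' (proj1_sig x)) with
  | left h => exist _ (proj1_sig x) h
  | right _ => Jwit s' end.

Lemma Jd_val s s' x : (forall y, proj1_sig s y -> proj1_sig s' y) -> proj1_sig (Jd s s' x) = proj1_sig x.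
Proof.
  intros H. unfold Jd. destruct (xm _) as [h|h]; auto. exfalso; apply h, H, (proj2_sig x).
Qed.

Lemma JleK (s : Jt) : leK K (JD s) M (@proj1_sig _ _).
Proof. apply (proj1 (proj2 (proj2_sig s))). Qed.

Lemma J_system : is_system K Jposet JD Jd.
Proof.
  split; [|split; [|split]].
  - intros s. apply (leK_props Mu K HA _ _ _ (JleK s)).
  - intros s s' Hss'. simpl in Hss'.
    apply (HCoh (JD s) (JD s') M (Jd s s') (@proj1_sig _ _)).
    + destruct (leK_emb Mu K HA _ _ _ (JleK s)) as [Hi [Hf Hr]].
      split; [|split].
      * intros a b E. apply Hi. rewrite <- (Jd_val s s' a), <- (Jd_val s s' b), E; auto.
      * intros f xs. apply sig_ext. rewrite Jd_val; auto. simpl. f_equal.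
        apply functional_extensionality; intros a. rewrite Jd_val; auto.
      * intros r xs. simpl. assert (E : (fun a => proj1_sig (Jd s s' (xs a))) = (fun a => proj1_sig (xs a))).
        { apply functional_extensionality; intros a; apply Jd_val; auto. } rewrite E. tauto.
    + apply JleK.
    + apply (leK_ext K _ _ _ _ (JleK s)). intros x. rewrite Jd_val; auto.
  - intros s x. apply sig_ext. apply Jd_val. auto.
  - intros i j k x Hij Hjk. apply sig_ext. rewrite !Jd_val; simpl in *; eauto.
Qed.

Lemma J_directed (Z : Type) (HZ : forall (J : Type), clt J Z -> clt J Kap \/ clt J Mu) :
  directed_lt Z Jposet.
Proof.
  intros P HP.
  destruct (classic (exists s : Jt, P s)) as [Hne|Hemp].
  - set (A := fun x => exists s : Jt, P s /\ proj1_sig s x).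
    assert (HSA : SS {x | A x}).
    { apply (SS_le _ {s : {s : Jt | P s} & {x | proj1_sig (proj1_sig s) x}}).
      - exists (fun x : {x | A x} => let p := choose _ (proj2_sig x) in
           existT (fun s : {s : Jt | P s} => {x | proj1_sig (proj1_sig s) x})
             (exist _ (proj1_sig p) (proj1 (proj2_sig p)))
             (exist _ (proj1_sig x) (proj2 (proj2_sig p)))).
        intros a b E. apply (f_equal (fun q : {s : {s : Jt | P s} & {x | proj1_sig (proj1_sig s) x}} => proj1_sig (projT2 q))) in E. simpl in E. apply sig_ext; auto.
      - apply SS_union; [apply HZ; auto|]. intros [s Ps]. simpl. apply (proj2_sig s). }
    destruct Hne as [s0 Ps0].
    destruct (proj2 (proj2 (proj2 (proj2_sig s0)))) as [x0 Hx0].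
    destruct (hull A HSA (ex_intro _ x0 (ex_intro _ s0 (conj Ps0 Hx0)))) as [S [HS HAS]].
    exists (exist _ S HS). intros s Ps x Hx. simpl. apply HAS. exists s; auto.
  - destruct (hull (fun x => x = m0)) as [S [HS _]].
    + apply (SS_le _ unit); auto. exists (fun _ => tt). intros [a Ha] [b Hb] _. apply sig_ext; simpl; congruence.
    + eauto.
    + exists (exist _ S HS). intros s Ps. exfalso; eauto.
Qed.

Lemma J_union : is_union K Jposet JD Jd M (fun s => @proj1_sig _ _).
Proof.
  split; [|split].
  - intros s. apply (leK_emb Mu K HA _ _ _ (JleK s)).
  - intros i j x Hij. apply Jd_val; auto.
  - intros y. destruct (hull (fun x => x = y)) as [S [HS Hy]].
    + apply (SS_le _ unit); auto. exists (fun _ => tt). intros [a Ha] [b Hb] _. apply sig_ext; simpl; congruence.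
    + eauto.
    + exists (exist _ S HS). exists (exist _ y (Hy y eq_refl)). reflexivity.
Qed.

Lemma size_lemma : presentable K Kap M -> SS (carrier M).
Proof.
  intros [_ Hp].
  assert (HDK : directed_lt Kap Jposet) by (apply J_directed; auto).
  assert (HDM : directed_lt Mu Jposet) by (apply J_directed; auto).
  pose proof (union_colimit Mu K HCh Hnat _ _ _ _ _ HDM J_system J_union) as Hcol.
  destruct (Hp Jposet JD Jd M (fun s => @proj1_sig _ _) HDK J_system Hcol) as [Hf _].
  destruct (Hf (fun x => x) (leK_refl Mu K HA M HM)) as [s [g [Hg Hgx]]].
  apply (SS_le _ {x | proj1_sig s x}).
  - exists g. intros a b E. rewrite <- (Hgx a), <- (Hgx b), E. reflexivity.
  - apply (proj2_sig s).
Qed.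

End SizeLemma.


Section MuOrder.
Variable Mu : Type.
Hypothesis HMu : regular_card Mu.

Lemma Mu_nat : cle nat Mu.
Proof. apply (proj1 HMu). Qed.

Lemma clt_irrefl_sub (A : Mu -> Prop) : clt {x | A x} Mu -> ~ (forall x, A x).
Proof. intros [_ H] Hall. apply H. exists (fun x => exist _ x (Hall x)). intros a b E.
  apply (f_equal (@proj1_sig _ _)) in E; exact E. Qed.

Lemma Mu_union2 (A B : Mu -> Prop) : clt {x | A x} Mu -> clt {x | B x} Mu -> clt {x | A x \/ B x} Mu.
Proof.
  intros HA' HB'.
  destruct (infinite_two Mu Mu_nat) as [m0 [m1 Hm]].
  set (P := fun x => x = m0 \/ x = m1).
  set (Q := fun i y => (i = m0 /\ A y) \/ (i <> m0 /\ B y)).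
  assert (HP : clt {x | P x} Mu).
  { split; [apply cle_sub|]. intros H. apply (infinite_not_bool Mu Mu_nat). eapply cle_trans; [exact H|].
    exists (fun x => if xm (proj1_sig x = m0) then true else false).
    intros [x Hx] [y Hy]; simpl. destruct (xm (x = m0)), (xm (y = m0)); intros E; try discriminate;
    apply sig_ext; simpl; unfold P in *; destruct Hx, Hy; congruence. }
  assert (HQ : forall i, P i -> clt {y | Q i y} Mu).
  { intros i Hi. destruct (xm (i = m0)) as [->|Hne].
    - eapply cle_clt_trans; [|exact HA']. apply cle_sub_mono. intros y [[_ H]|[H _]]; [auto|congruence].
    - eapply cle_clt_trans; [|exact HB']. apply cle_sub_mono. intros y [[H _]|[_ H]]; [congruence|auto]. }
  pose proof (proj2 HMu P Q HP HQ) as HS.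
  eapply cle_clt_trans; [|exact HS].
  exists (fun y : {x | A x \/ B x} => match xm (A (proj1_sig y)) with
     | left h => existT (fun i : {x | P x} => {y | Q (proj1_sig i) y}) (exist P m0 (or_introl eq_refl))
             (exist _ (proj1_sig y) (or_introl (conj eq_refl h)))
     | right h => existT (fun i : {x | P x} => {y | Q (proj1_sig i) y}) (exist P m1 (or_intror eq_refl))
             (exist _ (proj1_sig y) (or_intror (conj (fun e => Hm (eq_sym e))
                (match proj2_sig y with or_introl a => False_ind _ (h a) | or_intror b => b end)))) end).
  intros a b E.
  destruct (xm (A (proj1_sig a))), (xm (A (proj1_sig b)));
  apply (f_equal (fun q : {i : {x | P x} & {y | Q (proj1_sig i) y}} => (proj1_sig (projT1 q), proj1_sig (projT2 q)))) in E;
  simpl in E; inversion E; try congruence; apply sig_ext; auto.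
Qed.

Definition wo_pull {A B : Type} (f : A -> B) (Hf : injective f) (R : wo B) : wo A.
Proof.
  refine (WO A (fun x y => wlt R (f x) (f y)) _ _ _ _).
  - intros x; apply wlt_irrefl.
  - intros x y z; apply wlt_trans.
  - intros x y Hxy. apply wlt_total. intros E; apply Hxy, Hf, E.
  - intros P [a Pa]. destruct (wlt_least B R (fun s => exists a, P a /\ f a = s)) as [m [[a' [Pa' <-]] Hm]].
    + eauto.
    + exists a'. split; auto. intros w Pw Hw. apply (Hm (f w)); eauto.
Defined.

Lemma good_order : exists R : wo Mu, (forall z, clt {y | wlt R y z} Mu) /\
  (forall P : Mu -> Prop, clt {x | P x} Mu -> exists z, forall p, P p -> wlt R p z).
Proof.
  destruct (well_ordering Mu) as [R0].
  assert (Ha : exists R : wo Mu, forall z, clt {y | wlt R y z} Mu).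
  { destruct (classic (exists x, ~ clt {y | wlt R0 y x} Mu)) as [Hb|Hb].
    - destruct (wlt_least Mu R0 _ Hb) as [x0 [Hx0 Hmin]].
      assert (Hc : cle Mu {y | wlt R0 y x0}).
      { apply NNPP; intros Hn. apply Hx0. split; [apply cle_sub|auto]. }
      destruct Hc as [psi Hpsi].
      assert (Hinj : injective (fun x => proj1_sig (psi x))).
      { intros a b E. apply Hpsi, sig_ext, E. }
      exists (wo_pull _ Hinj R0). intros z. simpl.
      assert (Hs : clt {y | wlt R0 y (proj1_sig (psi z))} Mu).
      { apply NNPP; intros Hn. apply (Hmin (proj1_sig (psi z)) Hn (proj2_sig (psi z))). }
      eapply cle_clt_trans; [|exact Hs].
      exists (fun y : {y | wlt R0 (proj1_sig (psi y)) (proj1_sig (psi z))} => exist _ (proj1_sig (psi (proj1_sig y))) (proj2_sig y)).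
      intros a b E. apply (f_equal (@proj1_sig _ _)) in E. simpl in E. apply sig_ext, Hinj, E.
    - exists R0. intros z. apply NNPP; intros Hn. apply Hb. eauto. }
  destruct Ha as [R HR]. exists R. split; auto.
  intros P HP. apply NNPP; intros Hn.
  set (U1 := fun y => exists p, P p /\ wlt R y p).
  assert (HU1 : clt {y | U1 y} Mu).
  { set (Q := fun p y => wlt R y p).
    pose proof (proj2 HMu P Q HP (fun i _ => HR i)) as HS.
    eapply cle_clt_trans; [|exact HS].
    exists (fun y : {y | U1 y} => let q := choose _ (proj2_sig y) in
       existT (fun i : {x | P x} => {y | Q (proj1_sig i) y}) (exist P (proj1_sig q) (proj1 (proj2_sig q)))
         (exist _ (proj1_sig y) (proj2 (proj2_sig q)))).
    intros a b E.
    apply (f_equal (fun q : {i : {x | P x} & {y | Q (proj1_sig i) y}} => proj1_sig (projT2 q))) in E.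
    simpl in E. apply sig_ext; auto. }
  apply (clt_irrefl_sub _ (Mu_union2 _ _ HU1 HP)).
  intros z. apply NNPP; intros Hz. apply Hn. exists z. intros p Pp.
  destruct (classic (wlt R p z)) as [h|h]; auto. exfalso.
  destruct (classic (p = z)) as [->|Hne]; [apply Hz; right; auto|].
  destruct (wlt_total Mu R p z Hne) as [h'|h']; [contradiction|]. apply Hz. left. exists p. auto.
Qed.

End MuOrder.


Lemma rtrick (Mu B W : Type) :
  (forall P : Mu -> Prop, clt {x | P x} Mu -> cle ({x | P x} -> B) W) ->
  exists Q : {P : Mu -> Prop & ({x | P x} -> B)} -> Prop, ub_pow B Mu {s | Q s} /\ cle {s | Q s} W.
Proof.
  intros Hyp.
  set (iota := fun P (H : clt {x | P x} Mu) => proj1_sig (choose _ (Hyp P H))).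
  assert (Hiota : forall P H, injective (iota P H)) by (intros P H; exact (proj2_sig (choose _ (Hyp P H)))).
  set (val := fun s : {P : Mu -> Prop & ({x | P x} -> B)} => match xm (clt {x | projT1 s x} Mu) with
                | left H => Some (iota (projT1 s) H (projT2 s)) | right _ => None end).
  assert (inh : inhabited {P : Mu -> Prop & ({x | P x} -> B)}).
  { constructor. exists (fun _ => False). intros x. exfalso. exact (proj2_sig x). }
  set (rep := fun w => epsilon inh (fun s => val s = Some w)).
  assert (Hval : forall P (H : clt {x | P x} Mu) f, val (existT _ P f) = Some (iota P H f)).
  { intros P H f. unfold val. simpl. destruct (xm _) as [H'|H']; [|contradiction].
    rewrite (proof_irrelevance _ H H'). reflexivity. }
  assert (Hrep : forall P (H : clt {x | P x} Mu) f, val (rep (iota P H f)) = Some (iota P H f)).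
  { intros P H f. unfold rep. apply epsilon_spec. exists (existT _ P f). apply Hval. }
  exists (fun s => exists w, val s = Some w /\ s = rep w). split.
  - intros P H. exists (fun f => exist (fun s => exists w, val s = Some w /\ s = rep w) (rep (iota P H f))
                     (ex_intro _ (iota P H f) (conj (Hrep P H f) eq_refl))).
    intros f g E. apply (f_equal (@proj1_sig _ _)) in E. simpl in E.
    apply (Hiota P H). pose proof (Hrep P H f) as E1. pose proof (Hrep P H g) as E2.
    rewrite E in E1. rewrite E1 in E2. inversion E2. reflexivity.
  - exists (fun s : {s | exists w, val s = Some w /\ s = rep w} => proj1_sig (choose _ (proj2_sig s))).
    intros a b E. apply sig_ext.
    destruct (proj2_sig (choose _ (proj2_sig a))) as [_ Ea].
    destruct (proj2_sig (choose _ (proj2_sig b))) as [_ Eb].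
    rewrite Ea, Eb, E. reflexivity.
Qed.


Section FixT.
Variables Mu Lam : Type.
Hypothesis HMu : regular_card Mu.
Hypothesis Hcl : mu_closed Mu Lam.
Hypothesis HML : cle Mu Lam.
Variable Q0 : Lam -> Prop.
Hypothesis HL0pow : ub_pow {x | Q0 x} Mu {x | Q0 x}.
Hypothesis HML0 : cle Mu {x | Q0 x}.
Hypothesis HL0s : smallL Lam Q0.
Variable Qk : Lam -> Prop.
Hypothesis Hks : smallL Lam Qk.
Variable k0 : {x | Qk x}.
Variable R : wo Mu.
Hypothesis HRseg : forall z, clt {y | wlt R y z} Mu.
Hypothesis HRbound : forall P : Mu -> Prop, clt {x | P x} Mu -> exists z, forall p, P p -> wlt R p z.

Definition L0 := {x | Q0 x}.
Definition X := (L0 * {x | Qk x})%type.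
Definition T := {p : Mu * (Mu -> option X) | forall y, ~ wlt R y (fst p) -> snd p y = None}.

Lemma pair_inj : exists pi : L0 * L0 -> L0, injective pi.
Proof.
  destruct (two_Mu Mu HMu) as [m0 [m1 [Hm HP]]].
  destruct (cle_trans _ _ _ (prod_pow2 Mu m0 m1 L0 Hm) (HL0pow _ HP)) as [pi Hpi]. eauto.
Qed.

Lemma two_L0 : exists l0 l1 : L0, l0 <> l1.
Proof. apply infinite_two. eapply cle_trans; [apply (Mu_nat Mu HMu)| exact HML0]. Qed.

Lemma enc_exists : exists enc : Mu -> Mu -> option X -> X,
  forall u y o u' y' o', enc u y o = enc u' y' o' -> u = u' /\ y = y' /\ o = o'.
Proof.
  destruct pair_inj as [pi Hpi]. destruct two_L0 as [l0 [l1 Hl]]. destruct HML0 as [iM HiM].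
  assert (HoLx : exists optL : option L0 -> L0, forall o o', optL o = optL o' -> o = o').
  { exists (fun o : option L0 => match o with None => pi (l0, l0) | Some l => pi (l1, l) end).
    intros [a|] [b|]; intros E; apply Hpi in E; inversion E; subst; auto; congruence. }
  destruct HoLx as [optL HoL].
  assert (HoXx : exists optX : option X -> X, forall o o', optX o = optX o' -> o = o').
  { exists (fun o : option X => match o with None => (optL None, k0) | Some (l, k) => (optL (Some l), k) end).
    intros [[a ka]|] [[b kb]|] E; pose proof (f_equal fst E) as E1; pose proof (f_equal snd E) as E2;
      simpl in E1, E2; apply HoL in E1; congruence. }
  destruct HoXx as [optX HoX].
  exists (fun u y o => let p := optX o in (pi (iM u, pi (iM y, fst p)), snd p)).
  intros u y o u' y' o' E. inversion E as [[E1 E2]].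
  apply Hpi in E1. inversion E1 as [[E3 E4]]. apply Hpi in E4. inversion E4 as [[E5 E6]].
  apply HiM in E3. apply HiM in E5.
  assert (optX o = optX o') by (destruct (optX o), (optX o'); simpl in *; congruence).
  auto.
Qed.

Lemma seg_eq_eq (x x' : Mu) : (forall y, wlt R y x <-> wlt R y x') -> x = x'.
Proof.
  intros H. apply NNPP; intros Hne. destruct (wlt_total Mu R x x' Hne) as [h|h].
  - apply (wlt_irrefl Mu R x). apply H; auto.
  - apply (wlt_irrefl Mu R x'). apply H; auto.
Qed.

Lemma T_pow : forall P : Mu -> Prop, clt {x | P x} Mu -> cle ({x | P x} -> T) T.
Proof.
  intros P HP. destruct enc_exists as [enc Henc].
  set (xa := fun (G : {x | P x} -> T) a => fst (proj1_sig (G a))).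
  set (fa := fun (G : {x | P x} -> T) a => snd (proj1_sig (G a))).
  set (Spec := fun (G : {x | P x} -> T) (t : T) => forall a y o,
     (exists w, snd (proj1_sig t) w = Some (enc (proj1_sig a) y o)) <-> (wlt R y (xa G a) /\ fa G a y = o)).
  assert (Hex : forall G, exists t, Spec G t).
  { intros G.
    set (Q := fun u y => exists H : P u, wlt R y (xa G (exist P u H))).
    assert (HQ : forall i, P i -> clt {y | Q i y} Mu).
    { intros i Hi. eapply cle_clt_trans; [|apply (HRseg (xa G (exist P i Hi)))].
      apply cle_sub_mono. intros y [H Hy]. rewrite (proof_irrelevance _ Hi H). exact Hy. }
    pose proof (proj2 HMu P Q HP HQ) as HS.
    destruct HS as [[e He] HS2].
    destruct (HRbound (fun w => exists s, e s = w)) as [z Hz].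
    { eapply cle_clt_trans; [apply cle_image_back|]. split; [exists e; auto| auto]. }
    set (h := fun w => match xm (exists s, e s = w) with
       | left H => let s := proj1_sig (choose _ H) in
            Some (enc (proj1_sig (projT1 s)) (proj1_sig (projT2 s)) (fa G (projT1 s) (proj1_sig (projT2 s))))
       | right _ => None end).
    assert (Hh : forall y, ~ wlt R y (fst (z, h)) -> snd (z, h) y = None).
    { intros y Hy. simpl. unfold h. destruct (xm _) as [H|H]; auto. exfalso. apply Hy, Hz, H. }
    exists (exist _ (z, h) Hh). intros a y o. simpl. split.
    - intros [w Hw]. unfold h in Hw. destruct (xm _) as [H|H]; [|discriminate].
      destruct (choose _ H) as [[i [yy Hyy]] Es]. simpl in Hw. inversion Hw as [E].
      apply Henc in E. destruct E as [E1 [E2 E3]].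
      assert (i = a) by (apply sig_ext; auto). subst i yy.
      destruct Hyy as [H' Hy']. split; auto.
      replace a with (exist P (proj1_sig a) H'); auto. apply sig_ext; reflexivity.
    - intros [Hy Ho].
      assert (Hq : Q (proj1_sig a) y).
      { exists (proj2_sig a). replace (exist P (proj1_sig a) (proj2_sig a)) with a; auto. apply sig_ext; auto. }
      set (s := existT (fun i : {x | P x} => {y | Q (proj1_sig i) y}) a (exist _ y Hq)).
      exists (e s). unfold h. destruct (xm _) as [H|H]; [|exfalso; apply H; eauto].
      destruct (choose _ H) as [s' Es']. simpl. apply He in Es'. subst s'. simpl. rewrite Ho. reflexivity. }
  exists (fun G => proj1_sig (choose _ (Hex G))).
  intros G G' E.
  pose proof (proj2_sig (choose _ (Hex G))) as S1. pose proof (proj2_sig (choose _ (Hex G'))) as S2.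
  simpl in S1, S2. rewrite E in S1.
  apply functional_extensionality; intros a.
  assert (Hseg : forall y, wlt R y (xa G a) <-> wlt R y (xa G' a)).
  { intros y; split; intros Hy.
    - destruct (proj1 (S2 a y (fa G a y)) (proj2 (S1 a y _) (conj Hy eq_refl))) as [h _]; auto.
    - destruct (proj1 (S1 a y (fa G' a y)) (proj2 (S2 a y _) (conj Hy eq_refl))) as [h _]; auto. }
  pose proof (seg_eq_eq _ _ Hseg) as Ex.
  assert (Ef : fa G a = fa G' a).
  { apply functional_extensionality; intros y.
    destruct (classic (wlt R y (xa G a))) as [Hy|Hy].
    - destruct (proj1 (S2 a y (fa G a y)) (proj2 (S1 a y _) (conj Hy eq_refl))) as [_ h]; auto.
    - unfold fa. rewrite (proj2_sig (G a) y Hy). rewrite (proj2_sig (G' a) y); auto.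
      unfold xa in Ex. rewrite <- Ex. auto. }
  apply sig_ext. unfold xa, fa in *. destruct (proj1_sig (G a)), (proj1_sig (G' a)). simpl in *. congruence.
Qed.

Lemma X_T : cle X T.
Proof.
  destruct (infinite_two Mu (Mu_nat Mu HMu)) as [m0 [m1 Hm]].
  assert (Hlh : exists lo hi, wlt R lo hi).
  { destruct (wlt_total Mu R m0 m1 Hm); eauto. }
  destruct Hlh as [lo [hi Hlo]].
  exists (fun x => exist (fun p : Mu * (Mu -> option X) => forall y, ~ wlt R y (fst p) -> snd p y = None)
     (hi, fun y => if xm (wlt R y hi) then Some x else None)
     (fun y Hy => match xm (wlt R y hi) as s return ((if s then Some x else None) = None) with
                  | left h => False_ind _ (Hy h) | right _ => eq_refl end)).
  intros x x' E. apply (f_equal (fun t : T => snd (proj1_sig t) lo)) in E. simpl in E.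
  destruct (xm (wlt R lo hi)); [congruence|contradiction].
Qed.

Lemma Sm_T : Sm Lam T.
Proof.
  assert (SX : Sm Lam (option X)).
  { apply (Sm_le _ _ (X + bool)).
    - exists (fun o => match o with Some x => inl x | None => inr true end).
      intros [a|] [b|]; intros E; inversion E; auto.
    - apply (Sm_sum Mu Lam HMu Hcl HML); [|apply (Sm_bool Mu Lam HMu HML)].
      apply (Sm_prod Mu Lam HMu Hcl HML); apply Sm_subset; auto. }
  destruct (Sm_pow Mu Lam Hcl _ SX) as [W [HW HWc]].
  apply (Sm_le _ _ (Mu * {x | W x})).
  - set (io := fun z => proj1_sig (choose _ (HWc _ (HRseg z)))).
    assert (Hio : forall z, injective (io z)) by (intros z; exact (proj2_sig (choose _ (HWc _ (HRseg z))))).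
    exists (fun t : T => (fst (proj1_sig t), io (fst (proj1_sig t)) (fun y => snd (proj1_sig t) (proj1_sig y)))).
    intros [[z f] Hf] [[z' f'] Hf'] E. simpl in E. pose proof (f_equal fst E) as Ez. simpl in Ez. subst z'.
    pose proof (f_equal snd E) as H0. simpl in H0. apply Hio in H0.
    apply sig_ext. simpl. f_equal. apply functional_extensionality; intros y.
    destruct (classic (wlt R y z)) as [Hy|Hy].
    + exact (f_equal (fun g => g (exist _ y Hy)) H0).
    + pose proof (Hf y Hy) as A1. pose proof (Hf' y Hy) as A2. simpl in A1, A2. rewrite A1, A2. reflexivity.
  - apply (Sm_prod Mu Lam HMu Hcl HML).
    + apply (Sm_le _ _ L0); auto. apply Sm_subset; auto.
    + apply Sm_subset; auto.
Qed.

End FixT.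


Lemma prod_of_pow (Mu Y : Type) : regular_card Mu ->
  (forall P : Mu -> Prop, clt {x | P x} Mu -> cle ({x | P x} -> Y) Y) -> cle (Y * Y) Y.
Proof.
  intros HMu H. destruct (two_Mu Mu HMu) as [m0 [m1 [Hm HP]]].
  eapply cle_trans; [apply (prod_pow2 Mu m0 m1 Y Hm)| apply H; auto].
Qed.

Lemma sum_of_prod (Y : Type) (y0 y1 : Y) : y0 <> y1 -> cle (Y * Y) Y -> cle (Y + Y) Y.
Proof.
  intros Hy H. eapply cle_trans; [|exact H].
  exists (fun s => match s with inl a => (a, y0) | inr b => (b, y1) end).
  intros [a|a] [b|b] E; inversion E; auto; congruence.
Qed.

Section Pres.
Variables (Mu : Type) (K : aclass) (Lam : Type).
Hypothesis HMu : regular_card Mu.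
Hypothesis HA : abstract_class Mu K.
Hypothesis HCh : chain_axioms Mu K.
Hypothesis HCoh : coherence K.
Hypothesis Hcl : mu_closed Mu Lam.
Variable Q0 : Lam -> Prop.
Hypothesis HLS : LS_witness Mu K {x | Q0 x}.
Hypothesis HQ0 : smallL Lam Q0.
Variable Qk : Lam -> Prop.
Hypothesis Hreg : regular_card {x | Qk x}.

Lemma HML0 : cle Mu {x | Q0 x}.
Proof. destruct HLS as [_ [H _]]. eapply cle_trans; [|exact H]. exists inr. intros a b E; inversion E; auto. Qed.
Lemma HML : cle Mu Lam.
Proof. eapply cle_trans; [apply HML0| apply cle_sub]. Qed.
Lemma HL0pow : ub_pow {x | Q0 x} Mu {x | Q0 x}.
Proof. apply HLS. Qed.
Lemma HLST : forall M, inK K M -> forall A : carrier M -> Prop,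
    exists (M0 : structure (voc K)) h,
      leK K M0 M h /\ (forall x, A x -> exists y, h y = x) /\
      le_pow_lt_plus (carrier M0) {x | A x} Mu {x | Q0 x}.
Proof. apply HLS. Qed.

Lemma kappa_inh_ex : exists k : {x | Qk x}, True.
Proof. destruct Hreg as [[f _] _]. exists (f 0); auto. Qed.
Definition kappa_inh : {x | Qk x} := proj1_sig (choose _ kappa_inh_ex).

Lemma pres_not_big (M : structure (voc K)) : presentable K {x | Qk x} M -> ~ cle Lam (carrier M).
Proof.
  intros Hp Hbig.
  assert (HM : inK K M) by apply Hp.
  assert (Hm0 : exists m : carrier M, True).
  { destruct Hbig as [f _]. destruct (nat_Lam Mu Lam HMu HML) as [g _]. exists (f (g 0)); auto. }
  pose (m0 := proj1_sig (choose _ Hm0)).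
  pose proof (Mu_nat Mu HMu) as Hnat.
  destruct (classic (smallL Lam Qk)) as [Hks|Hks].
  - destruct (good_order Mu HMu) as [R [HRseg HRb]].
    set (TT := T Mu Lam Q0 Qk R).
    pose proof (T_pow Mu Lam HMu Q0 HL0pow HML0 Qk kappa_inh R HRseg HRb) as HTp.
    assert (HXT : cle (X Lam Q0 Qk) TT) by apply X_T, HMu.
    assert (HTT : cle (TT * TT) TT) by (apply (prod_of_pow Mu); auto).
    destruct (infinite_two {x | Q0 x} (cle_trans _ _ _ Hnat HML0)) as [l0 [l1 Hl]].
    destruct HXT as [xt Hxt].
    assert (HT2 : cle (TT + TT) TT).
    { apply (sum_of_prod _ (xt (l0, kappa_inh)) (xt (l1, kappa_inh))); auto.
      intros E. apply Hxt in E. inversion E. congruence. }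
    assert (HkT : cle {x | Qk x} TT).
    { exists (fun k => xt (l0, k)). intros a b E. apply Hxt in E. inversion E; auto. }
    assert (HL0T : cle {x | Q0 x} TT).
    { exists (fun l => xt (l, kappa_inh)). intros a b E. apply Hxt in E. inversion E; auto. }
    assert (HS : cle (carrier M) TT).
    { apply (size_lemma Mu K HA HCh HCoh Hnat {x | Q0 x} HLST {x | Qk x} (fun Y => cle Y TT)); auto.
      - intros Y Z H1 H2; eapply cle_trans; eauto.
      - intros J F HJ HF.
        assert (HJT : cle J TT).
        { destruct HJ as [[H _]|[H _]].
          - eapply cle_trans; eauto.
          - eapply cle_trans; [exact H|]. eapply cle_trans; [apply HML0| exact HL0T]. }
        destruct HJT as [jt Hjt].
        set (fj := fun j => proj1_sig (choose _ (HF j))).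
        assert (Hfj : forall j, injective (fj j)) by (intros j; exact (proj2_sig (choose _ (HF j)))).
        eapply cle_trans; [|exact HTT].
        exists (fun s => (jt (projT1 s), fj (projT1 s) (projT2 s))).
        intros [j x] [j' x'] E. simpl in E. inversion E as [[E1 E2]]. apply Hjt in E1. subst j'.
        apply Hfj in E2. subst. reflexivity.
      - intros B HB.
        destruct (rtrick Mu B TT) as [Q [HQ HQT]].
        { intros P HP. eapply cle_trans; [|apply (HTp P HP)].
          destruct HB as [b Hb]. exists (fun f x => b (f x)). intros f g E.
          apply functional_extensionality; intros x. apply Hb. exact (f_equal (fun h => h x) E). }
        exists Q. split; auto. eapply cle_trans; [|exact HT2].
        destruct HQT as [q Hq]. destruct HL0T as [lt Hlt].
        exists (fun s => match s with inl a => inl (q a) | inr b => inr (lt b) end).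
        intros [a|a] [b|b] E; inversion E as [E']; f_equal; auto.
      - exists (fun _ => xt (l0, kappa_inh)). intros [] [] _; auto. }
    apply (Sm_not Lam (carrier M)); [|exact Hbig].
    apply (Sm_le _ _ TT HS). apply (Sm_T Mu Lam HMu Hcl HML Q0 HML0 HQ0 Qk Hks R HRseg).
  - assert (HLk : cle Lam {x | Qk x}).
    { apply NNPP; intros Hn. apply Hks. split; [apply cle_sub|auto]. }
    assert (Sm_k : forall Y, clt Y {x | Qk x} -> Sm Lam Y).
    { intros Y [[e He] HY].
      exists (fun l => exists y, proj1_sig (e y) = l). split.
      - split; [apply cle_sub|]. intros H. apply HY.
        eapply cle_trans; [apply cle_sub|]. eapply cle_trans; [exact H|]. apply cle_image_back.
      - apply cle_image. intros a b E; apply He, sig_ext, E. }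
    assert (Sm_clt : forall Y, Sm Lam Y -> clt Y {x | Qk x}).
    { intros Y HY. split.
      - destruct HY as [S [_ H]]. eapply cle_trans; [exact H|]. eapply cle_trans; [apply cle_sub|exact HLk].
      - intros H. apply (Sm_not Lam Y HY). eapply cle_trans; eauto. }
    assert (HS : Sm Lam (carrier M)).
    { apply (size_lemma Mu K HA HCh HCoh Hnat {x | Q0 x} HLST {x | Qk x} (Sm Lam)); auto.
      - intros Y Z H1 H2. eapply Sm_le; eauto.
      - intros J F HJ HF.
        assert (HJk : clt J {x | Qk x}).
        { destruct HJ as [H|H]; auto. apply Sm_clt.
          apply (Sm_le _ _ {x | Q0 x}); [eapply cle_trans; [apply H|apply HML0]| apply Sm_subset; auto]. }
        apply Sm_k.
        destruct HJk as [[jk Hjk] HJk2].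
        set (fk := fun j => proj1_sig (choose _ (proj1 (Sm_clt _ (HF j))))).
        assert (Hfk : forall j, injective (fk j)) by (intros j; exact (proj2_sig (choose _ (proj1 (Sm_clt _ (HF j)))))).
        set (P := fun k => exists j, jk j = k).
        set (Qr := fun k y => exists j, jk j = k /\ exists x, fk j x = y).
        assert (HP : clt {k | P k} {x | Qk x}).
        { eapply cle_clt_trans; [apply cle_image_back|]. split; [exists jk; auto|auto]. }
        assert (HQ : forall i, P i -> clt {y | Qr i y} {x | Qk x}).
        { intros i [j Hj]. apply (cle_clt_trans _ (F j)); [|apply Sm_clt; auto].
          eapply cle_trans; [|apply (cle_image_back (fk j))].
          apply cle_sub_mono. intros y [j' [Hj' Hy]]. rewrite <- Hj in Hj'. apply Hjk in Hj'. subst j'. auto. }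
        pose proof (proj2 Hreg P Qr HP HQ) as HS.
        eapply cle_clt_trans; [|exact HS].
        exists (fun s : {j : J & F j} =>
           existT (fun i : {k | P k} => {y | Qr (proj1_sig i) y})
             (exist P (jk (projT1 s)) (ex_intro _ (projT1 s) eq_refl))
             (exist _ (fk (projT1 s) (projT2 s)) (ex_intro _ (projT1 s) (conj eq_refl (ex_intro _ (projT2 s) eq_refl))))).
        intros [j x] [j' x'] E.
        apply (f_equal (fun q : {i : {k | P k} & {y | Qr (proj1_sig i) y}} => (proj1_sig (projT1 q), proj1_sig (projT2 q)))) in E.
        simpl in E. inversion E as [[E1 E2]]. apply Hjk in E1. subst j'. apply Hfk in E2. subst. reflexivity.
      - intros B HB.
        destruct (Sm_pow Mu Lam Hcl B HB) as [W [HW HWc]].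
        destruct (rtrick Mu B {x | W x} HWc) as [Q [HQ HQW]].
        exists Q. split; auto.
        apply (Sm_sum Mu Lam HMu Hcl HML).
        + apply (Sm_le _ _ _ HQW). apply Sm_subset; auto.
        + apply Sm_subset; auto.
      - apply (Sm_le _ _ bool); [|apply (Sm_bool Mu Lam HMu HML)].
        exists (fun _ => true). intros [] [] _; auto. }
    exact (Sm_not Lam _ HS Hbig).
Qed.

End Pres.


Lemma singleton_colimit (K : aclass) (I : poset) (D : pcar I -> structure (voc K))
  (d : forall i j, carrier (D i) -> carrier (D j)) (j : pcar I) :
  is_system K I D d ->
  is_colimit K (subposet I (fun i => i = j)) (fun i => D (proj1_sig i))
    (fun i i' => d (proj1_sig i) (proj1_sig i')) (D j) (fun i => d (proj1_sig i) j).
Proof.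
  intros [HK [Hle [Hid Hcomp]]].
  split; [split; [|split]|].
  - auto.
  - intros [i0 Hi0]. simpl. subst i0. apply Hle, ple_refl.
  - intros [i0 Hi0] [i1 Hi1] x _. simpl. subst. rewrite Hid. reflexivity.
  - intros P h [HP [HhK Hhc]].
    split.
    + exists (h (exist _ j eq_refl)). split.
      * apply (HhK (exist _ j eq_refl)).
      * intros [i0 Hi0] x. simpl. subst i0. rewrite Hid. reflexivity.
    + intros v v' _ _ Hv Hv' y.
      pose proof (Hv (exist _ j eq_refl) y) as E1. pose proof (Hv' (exist _ j eq_refl) y) as E2.
      simpl in E1, E2. rewrite Hid in E1, E2. congruence.
Qed.

Theorem lemma6p5 (Mu : Type) (K : aclass) (Lam : Type) :
  regular_card Mu ->
  muAEC Mu K ->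
  (* Lam > LS(K): some LST witness (hence the least one) is < Lam *)
  (exists Q : Lam -> Prop, LS_witness Mu K {x | Q x} /\ clt {x | Q x} Lam) ->
  mu_closed Mu Lam ->
  forall (I : poset) (D : pcar I -> structure (voc K))
         (d : forall i j, carrier (D i) -> carrier (D j)),
    is_system K I D d ->
    succ_directed Lam I ->
    boundedly_presentable_succ K Lam I D d ->
    forall L c, is_colimit K I D d L c -> ~ proper K I D d L c.
Proof.
  intros HMu [HA [HCoh [HCh _]]] [Q0 [HLS HQ0]] Hcl I D d HS Hsd Hbp L c Hcol Hprop.
  pose proof (HML Mu K Lam Q0 HLS) as HMLam.
  pose proof (Mu_nat Mu HMu) as Hnat.
  assert (HDmu : directed_lt Mu I).
  { intros P HP. apply Hsd. eapply cle_trans; [apply HP|exact HMLam]. }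
  pose proof Hcol as [[HLK [Hc Hcc]] Huniv].
  pose proof (colimit_covered Mu K HA HCh I D d L c HDmu HS Hc Hcc Hcol) as Hcov.
  assert (Hns : forall j, exists y, forall x, c j x <> y).
  { intros j. apply NNPP; intros Hn. apply Hprop.
    destruct (split_of_surj Mu K HA (D j) L (c j) (Hc j)) as [g [Hg Hgc]].
    - intros y. apply NNPP; intros Hy. apply Hn. exists y. intros x E. apply Hy; eauto.
    - exists j, g. auto. }
  assert (Hpres : forall j, presentable_lt_succ K Lam (D j)).
  { intros j. apply (Hbp (fun i => i = j) (ex_intro _ j (fun i (H : i = j) => eq_ind_r (fun i => ple I i j) (ple_refl I j) H))
       (D j) (fun i => d (proj1_sig i) j)).
    apply singleton_colimit; auto. }
  destruct (well_ordering Lam) as [R].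
  set (idx := fun y => proj1_sig (choose _ (Hcov y))).
  assert (Hidx : forall y, exists x, c (idx y) x = y) by (intros y; exact (proj2_sig (choose _ (Hcov y)))).
  assert (Hbound : forall (a : Lam) (rec : forall a', wlt R a' a -> carrier L),
     exists j, forall a' H, ple I (idx (rec a' H)) j).
  { intros a rec.
    destruct (Hsd (fun i => exists a' H, i = idx (rec a' H))) as [j Hj].
    - exists (fun i : {i | exists a' H, i = idx (rec a' H)} => proj1_sig (choose _ (proj2_sig i))).
      intros [i1 H1] [i2 H2] E. simpl in E. apply sig_ext. simpl.
      destruct (proj2_sig (choose _ H1)) as [Ha1 E1]. destruct (proj2_sig (choose _ H2)) as [Ha2 E2].
      rewrite E1, E2. clear E1 E2. revert Ha1 Ha2. rewrite E. intros Ha1 Ha2.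
      rewrite (proof_irrelevance _ Ha1 Ha2). reflexivity.
    - exists j. intros a' H. apply Hj. eauto. }
  set (step := fun a (rec : forall a', wlt R a' a -> carrier L) =>
      proj1_sig (choose _ (Hns (proj1_sig (choose _ (Hbound a rec)))))).
  destruct (wf_rec (wlt R) (wo_wf R) step) as [phi Hphi].
  set (ja := fun a => proj1_sig (choose _ (Hbound a (fun a' _ => phi a')))).
  assert (Hja : forall a' a, wlt R a' a -> ple I (idx (phi a')) (ja a)).
  { intros a' a H. exact (proj2_sig (choose _ (Hbound a (fun a' _ => phi a'))) a' H). }
  assert (Hnot : forall a x, c (ja a) x <> phi a).
  { intros a x. rewrite Hphi. exact (proj2_sig (choose _ (Hns (ja a))) x). }
  assert (Hin : forall a' j, ple I (idx (phi a')) j -> exists x, c j x = phi a').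
  { intros a' j H. destruct (Hidx (phi a')) as [x Hx]. exists (d _ j x). rewrite Hcc; auto. }
  assert (Hphi_inj : injective phi).
  { intros a b E. apply NNPP; intros Hab.
    destruct (wlt_total Lam R a b Hab) as [H|H].
    - destruct (Hin a (ja b) (Hja a b H)) as [x Hx]. apply (Hnot b x). congruence.
    - destruct (Hin b (ja a) (Hja b a H)) as [x Hx]. apply (Hnot a x). congruence. }
  destruct (Hsd (fun i => exists a, i = idx (phi a))) as [js Hjs].
  { exists (fun i : {i | exists a, i = idx (phi a)} => proj1_sig (choose _ (proj2_sig i))).
    intros [i1 H1] [i2 H2] E. simpl in E. apply sig_ext. simpl.
    rewrite (proj2_sig (choose _ H1)), (proj2_sig (choose _ H2)), E. reflexivity. }
  assert (Hbig : cle Lam (carrier (D js))).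
  { assert (Hx : forall a, exists x, c js x = phi a) by (intros a; apply Hin, Hjs; eauto).
    exists (fun a => proj1_sig (choose _ (Hx a))).
    intros a b E. apply Hphi_inj.
    rewrite <- (proj2_sig (choose _ (Hx a))), <- (proj2_sig (choose _ (Hx b))), E. reflexivity. }
  destruct (Hpres js) as [Qk [Hreg Hp]].
  exact (pres_not_big Mu K Lam HMu HA HCh HCoh Hcl Q0 HLS HQ0 Qk Hreg (D js) Hp Hbig).
Qed.
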